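(* Let $X$ be a locally compact Hausdorff space and $(Y,\Delta)$ an $X$-simplicial complex satisfying hypotheses $(H_1)$ and $(H_2)$. Then every element of $\mathcal S=\bigcup_{\mu\in|\Delta|}S(\mu)$ is relatively compact in $|\Delta|$. Moreover, $|\Delta|$ is locally compact.
   Context: An $X$-simplicial complex is a pair $(Y,\Delta)$ with $Y$ locally compact Hausdorff, $\rho:Y\to X$ a local homeomorphism, and $\Delta$ a family of finite nonempty subsets of $Y$ of bounded cardinality, each contained in a fibre $\rho^{-1}(x)$, closed under taking nonempty subsets. $P(Y)$ is the space of positive Radon measures of total mass $1$ supported in a single fibre of $\rho$, with the weak-$*$ topology from $C_c(Y,\mathbb R)$, and $|\Delta|=\{\mu\in P(Y):\mathrm{supp}(\mu)\in\Delta\}$ with the subspace topology. $(H_1)$: for every compact $K\subseteq Y$, $C_K=\{y\in Y:\exists y'\in K,\{y,y'\}\in\Delta\}$ is compact. $(H_2)$: if nets $(y^{(i)}_\lambda)_\lambda$, $0\le i\le k$, converge to $y^{(i)}$ and $\{y^{(0)}_\lambda,\dots,y^{(k)}_\lambda\}\in\Delta$ for all $\lambda$, then $\{y^{(0)},\dots,y^{(k)}\}\in\Delta$. For $\mu=\sum_{i=0}^mc_i\delta_{y_i}\in|\Delta|$ with $c_i>0$, $S(\mu)$ is the set of all sets $W(\mu,(f_i)_i,\epsilon)=\{\nu\in|\Delta|:|\nu(f_i)-\mu(f_i)|<\epsilon\ \forall i\}$ where $f_0,\dots,f_m\in C_c(Y,[0,1])$ and $\epsilon>0$ satisfy: each $f_i$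 is supported in a relatively compact open neighbourhood $V_i$ of $y_i$ on which $\rho$ restricts to a homeomorphism onto an open subset of $X$, $f_i(y_i)>0$, and $0<\epsilon<\min_i c_if_i(y_i)$. *)

(* Defs.v *)
From HB Require Import structures.
From mathcomp Require Import all_boot all_order all_algebra.
From mathcomp Require Import all_classical all_reals all_analysis.
Set Implicit Arguments. Unset Strict Implicit. Unset Printing Implicit Defensive.
Import Order.TTheory GRing.Theory Num.Theory.
Local Open Scope classical_set_scope.
Local Open Scope ring_scope.

Section XSimplicial.
Context {R : realType}.

(** ρ restricted to V is a homeomorphism onto an open subset of X:
    V open, ρ continuous and injective on V, and ρ maps open subsets of V
    to open subsets of X (in particular ρ(V) is open). *)
Definition homeo_chart {Y X : topologicalType} (rho : Y -> X) (V : set Y) :=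
  [/\ open V, {within V, continuous rho},
      (forall a b, V a -> V b -> rho a = rho b -> a = b) &
      (forall W, open W -> W `<=` V -> open (rho @` W))].

Definition local_homeomorphism {Y X : topologicalType} (rho : Y -> X) :=
  forall y : Y, exists2 U : set Y, U y & homeo_chart rho U.

Definition X_simplicial_complex {Y X : topologicalType} (rho : Y -> X)
    (Delta : set (set Y)) :=
  [/\ (forall s, Delta s -> finite_set s /\ s !=set0),
      (exists N : nat, forall s, Delta s -> card_le s `I_N),
      (forall s, Delta s -> exists x : X, s `<=` rho @^-1` [set x]) &
      (forall s t, Delta s -> t `<=` s -> t !=set0 -> Delta t)].

Definition hyp_H1 {Y : topologicalType} (Delta : set (set Y)) :=
  forall K : set Y, compact K ->
    compact [set y | exists2 y', K y' & Delta ([set y] `|` [set y'])].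

Definition directed_set (L : Type) (le : L -> L -> Prop) :=
  [/\ inhabited L, (forall a, le a a), (forall a b c, le a b -> le b c -> le a c)
    & (forall a b, exists c, le a c /\ le b c)].

Definition net_converges {Y : topologicalType} (L : Type) (le : L -> L -> Prop)
    (x : L -> Y) (y : Y) :=
  forall U : set Y, nbhs y U -> exists l0, forall l, le l0 l -> U (x l).

Definition hyp_H2 {Y : topologicalType} (Delta : set (set Y)) :=
  forall (L : Type) (le : L -> L -> Prop) (k : nat)
         (ys : 'I_k.+1 -> L -> Y) (lim : 'I_k.+1 -> Y),
    directed_set le ->
    (forall i, net_converges le (ys i) (lim i)) ->
    (forall l, Delta (range (fun i => ys i l))) ->
    Delta (range lim).

Definition supp {Y : choiceType} (m : Y -> R) : set Y := [set y | m y != 0].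

(** Finitely supported probability measures whose support lies in Δ,
    represented by their weights: μ = Σ_{y ∈ supp μ} μ(y) δ_y. *)
Definition is_simplex_pt {Y : choiceType} (Delta : set (set Y)) (m : Y -> R) :=
  [/\ Delta (supp m), (forall y, 0 <= m y) & \sum_(y \in supp m) m y = 1].

Definition pairing {Y : choiceType} (m : Y -> R) (f : Y -> R) : R :=
  \sum_(y \in supp m) m y * f y.

Definition Cc_set (Y : topologicalType) : set (Y -> R) :=
  fun f : Y -> R => continuous (f : Y -> R^o) /\ compact (closure (supp f)).
Definition Cc (Y : topologicalType) := set_type (@Cc_set Y).

Definition simplex_pts {Y : topologicalType} (Delta : set (set Y)) :=
  set_type (is_simplex_pt Delta).

Definition eval_map {Y : topologicalType} (Delta : set (set Y))
    (mu : simplex_pts Delta) : {ptws Cc Y -> R^o} :=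
  fun f => pairing (val mu) (val f).

(** |Δ| with the (subspace of the) weak-* topology *)
Definition realization {Y : topologicalType} (Delta : set (set Y)) :=
  initial_topology (@eval_map Y Delta).

Definition rl_weights {Y : topologicalType} {Delta : set (set Y)}
   (mu : realization Delta) : Y -> R := val (mu : simplex_pts Delta).

Definition S_nbhd {Y X : topologicalType} (rho : Y -> X) (Delta : set (set Y))
    (mu : realization Delta) (W : set (realization Delta)) :=
  exists (f : Y -> Y -> R) (V : Y -> set Y) (eps : R),
  [/\ (forall y, supp (rl_weights mu) y ->
        [/\ @Cc_set Y (f y), (forall z, 0 <= f y z <= 1),
            closure (supp (f y)) `<=` V y,
            [/\ V y y, open (V y), compact (closure (V y)) &
                 homeo_chart rho (V y)] & 0 < f y y]),
      0 < eps,
      (forall y, supp (rl_weights mu) y -> eps < rl_weights mu y * f y y) &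
      W = [set nu : realization Delta | forall y, supp (rl_weights mu) y ->
             `|pairing (rl_weights nu) (f y) - pairing (rl_weights mu) (f y)| < eps]].

End XSimplicial.

(* Main.v *)
Set Warnings "-all".
Require Import Defs.
From HB Require Import structures.
From mathcomp Require Import all_boot all_order all_algebra.
From mathcomp Require Import all_classical all_reals all_analysis.
Import Order.TTheory GRing.Theory Num.Theory.
Import numFieldNormedType.Exports.
Local Open Scope classical_set_scope.
Local Open Scope ring_scope.
Section Gen.
Context {R : realType}.

Lemma pairing_repr {Y : choiceType} n (m : Y -> R) (p : 'I_n -> Y) (w : 'I_n -> R)
  (g : Y -> R) :
  (forall y, m y = \sum_(i < n | y == p i) w i) ->
  pairing m g = \sum_(i < n) w i * g (p i).
Proof.
move=> hm; set r := undup [seq p i | i <- enum 'I_n].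
have ur : uniq r := undup_uniq _.
have memr i : p i \in r.
  by rewrite mem_undup; apply/mapP; exists i; rewrite ?mem_enum.
rewrite /pairing (fsbig_fwiden r).
- under eq_bigr => y _ do rewrite hm big_distrl big_mkcond /=.
  rewrite exchange_big /=; apply: eq_bigr => i _.
  rewrite -big_mkcond /= -big_filter filter_pred1_uniq // big_seq1.
  by [].
- move=> y; rewrite /supp /= => my; apply: contraPP my => yr.
  rewrite hm big_pred0 ?eqxx // => i; apply/negP => /eqP yp.
  by apply: yr; rewrite yp.
- exact: ur.
- move=> y [_]; rewrite /supp /= => /negP; rewrite negbK => /eqP ->.
  by rewrite mul0r.
Qed.
Section Enum.
Context {Y : choiceType} (y0 : Y) (m : Y -> R).
Definition en : seq Y := finmap.enum_fset (fset_set (supp m)).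
Definition pn (i : nat) : Y := nth y0 en (if (i < size en)%N then i else 0%N).
Definition wn (i : nat) : R := if (i < size en)%N then m (pn i) else 0.

Hypothesis fin : finite_set (supp m).

Lemma en_mem y : (y \in en) = (m y != 0).
Proof.
have := in_fset_set fin y; rewrite /en.
move=> h; apply: (etrans h); apply/idP/idP; rewrite in_setE /supp //=.
Qed.

Lemma en_uniq : uniq en.
Proof. exact: finmap.fset_uniq. Qed.

Lemma repr_en n y : (size en <= n)%N ->
  m y = \sum_(i < n | pn i == y) wn i.
Proof.
move=> sz; rewrite big_mkcond /= -(big_mkord xpredT (fun i => if pn i == y then wn i else 0)).
rewrite (@big_cat_nat _ _ _ (size en) 0 n _ _ (leq0n _) sz) /=.
rewrite [X in _ + X]big1_seq ?addr0; last first.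
  move=> i /andP[_]; rewrite mem_index_iota => /andP[si _].
  by rewrite /wn ltnNge si /=; case: ifP.
rewrite big_nat_cond.
under eq_bigr => i /andP[/andP[_ si] _] do rewrite /wn /pn si.
rewrite -big_nat_cond.
rewrite -(big_nth y0 xpredT (fun z => if z == y then m z else 0)).
rewrite -big_mkcond /=.
case yen : (y \in en).
  by rewrite -big_filter filter_pred1_uniq ?en_uniq // big_seq1.
rewrite big_hasC; last first.
  by apply/hasPn => z zen /=; apply/eqP => zy; rewrite -zy zen in yen.
by apply/eqP; move: yen; rewrite en_mem => /negbFE.
Qed.

End Enum.

Lemma repr_en' {Y : choiceType} (y0 : Y) (m : Y -> R) n y :
  finite_set (supp m) -> (size (en m) <= n)%N ->
  m y = \sum_(i < n | y == pn y0 m i) wn y0 m i.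
Proof.
move=> fin sz; rewrite (@repr_en Y y0 m fin n y sz); apply: eq_bigl => i.
by rewrite eq_sym.
Qed.

Lemma pairing_ge {Y : choiceType} (m g : Y -> R) y :
  finite_set (supp m) -> (forall z, 0 <= m z) -> (forall z, 0 <= g z) ->
  supp m y -> m y * g y <= pairing m g.
Proof.
move=> fin m0 g0 sy; rewrite /pairing (fsbigD1 y) //=.
rewrite lerDl; apply: fsumr_ge0 => z _; exact: mulr_ge0.
Qed.

End Gen.

Lemma initial_cvg_from {S : choiceType} {U : topologicalType} (h : S -> U)
  (F : set_system (initial_topology h)) (s : initial_topology h) :
  Filter F -> h @ F --> h s -> F --> s.
Proof.
move=> FF hF A; rewrite nbhsE => -[B [oB Bs] BA].
case: oB => C oC CB; apply: filterS BA _; rewrite -CB.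
apply: hF; apply: open_nbhs_nbhs; split => //.
by move: Bs; rewrite -CB.
Qed.

Lemma ptws_cvg_from {I : Type} {U : topologicalType} (F : set_system {ptws I -> U})
  (g : {ptws I -> U}) : Filter F ->
  (forall i, (fun k : {ptws I -> U} => k i) @ F --> g i) -> F --> g.
Proof.
move=> FF hF; apply/cvg_sup => i; apply: initial_cvg_from; exact: hF.
Qed.

Lemma ultra_push_cvg (S : Type) (V : topologicalType) (F : set_system S)
  (g : S -> V) (C : set V) :
  UltraFilter F -> compact C -> F (g @^-1` C) -> exists2 q, C q & g @ F --> q.
Proof.
move=> UF cC FC; have PF : ProperFilter F by exact: ultra_proper.
have [q [Cq clq]] := cC (g @ F) (fmap_proper_filter g PF) FC.
exists q => // U nU.
have [//|FnU] := in_ultra_setVsetC (g @^-1` U) UF.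
have [z [nz uz]] := clq (~` U) U FnU nU; exfalso; exact: nz.
Qed.

Lemma closure_sub {T : topologicalType} (A B : set T) :
  closed B -> A `<=` B -> closure A `<=` B.
Proof.
move=> cB AB; have -> : B = closure B by apply/closure_id.
exact: closureS.
Qed.
Lemma cvg_sum_ord {R : realType} {T : Type} (F : set_system T) (FF : Filter F) n
  (u : 'I_n -> T -> R^o) (l : 'I_n -> R^o) :
  (forall i, u i @ F --> l i) -> (fun x => \sum_(i < n) u i x) @ F --> \sum_(i < n) l i.
Proof.
move=> h.
apply: (@cvg_big R^o 'I_n +%R 0 xpredT).
- exact: add_continuous.
- by move=> i _; exact: h.
Qed.

Definition ev {R : realType} {Y : topologicalType} (Delta : set (set Y))
  (f : Y -> R) (nu : @realization R Y Delta) : R^o := pairing (rl_weights nu) f.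

Lemma ev_cont {R : realType} {Y : topologicalType} (Delta : set (set Y)) (f : Cc Y) :
  continuous (@ev R Y Delta (val f)).
Proof.
move=> x.
have h1 := @initial_continuous _ _ (@eval_map R Y Delta) x.
have h2 := @proj_continuous (Cc Y) (fun _ => R^o) f (eval_map x).
have := continuous_comp h1 h2.
by [].
Qed.

Section Main.
Context {R : realType} {Y : topologicalType} (Delta : set (set Y)) (N : nat).
Hypothesis hDfin : forall s, Delta s -> finite_set s /\ s !=set0.
Hypothesis hDcard : forall s, Delta s -> card_le s `I_N.
Hypothesis hDsub : forall s t, Delta s -> t `<=` s -> t !=set0 -> Delta t.
Local Notation T := (@realization R Y Delta).

Lemma simplexT (nu : T) : is_simplex_pt Delta (rl_weights nu).
Proof. exact: (set_valP (nu : simplex_pts Delta)). Qed.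

Lemma finT (nu : T) : finite_set (supp (rl_weights nu)).
Proof. by have [/hDfin[]] := simplexT nu. Qed.

Lemma suppT_ne (nu : T) : supp (rl_weights nu) !=set0.
Proof. by have [/hDfin[]] := simplexT nu. Qed.

Lemma sizeT (nu : T) : (size (en (rl_weights nu)) <= N)%N.
Proof. by have [/hDcard/geq_card_fset_set] := simplexT nu. Qed.

Lemma size_pos (nu : T) : (0 < size (en (rl_weights nu)))%N.
Proof.
have [y sy] := suppT_ne nu.
have : y \in en (rl_weights nu) by rewrite en_mem //; exact: finT.
by case: (en _).
Qed.

Section WithPoint.
Variable y0 : Y.
Definition P (nu : T) (i : 'I_N.+1) : Y := pn y0 (rl_weights nu) i.
Definition Wt (nu : T) (i : 'I_N.+1) : R := wn y0 (rl_weights nu) i.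

Lemma ev_repr (nu : T) g : ev Delta g nu = \sum_(i < N.+1) Wt nu i * g (P nu i).
Proof.
rewrite /ev (@pairing_repr R Y _ _ (P nu) (Wt nu)) // => y.
exact: repr_en' (finT nu) (leqW (sizeT nu)).
Qed.

Lemma P_supp (nu : T) i : supp (rl_weights nu) (P nu i).
Proof.
rewrite /P /pn /=; set s := en _.
have : nth y0 s (if (i < size s)%N then (i : nat) else 0%N) \in s.
  by case: ifP => [//|_]; apply: mem_nth; exact: size_pos.
by rewrite en_mem //; exact: finT.
Qed.

Lemma range_P (nu : T) : range (P nu) = supp (rl_weights nu).
Proof.
apply/seteqP; split; first by move=> _ [i _ <-]; exact: P_supp.
move=> y sy.
have ys : y \in en (rl_weights nu) by rewrite en_mem //; exact: finT.
have ilt : (index y (en (rl_weights nu)) < N.+1)%N.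
  by apply: (leq_trans _ (leqW (sizeT nu))); rewrite index_mem.
exists (Ordinal ilt) => //.
by rewrite /P /pn /= index_mem ys nth_index.
Qed.

Lemma Wt_ge0 (nu : T) i : 0 <= Wt nu i.
Proof.
rewrite /Wt /wn; case: ifP => // _.
by have [_ h _] := simplexT nu.
Qed.

Lemma Wt_sum (nu : T) : \sum_(i < N.+1) Wt nu i = 1.
Proof.
have := ev_repr nu (fun _ => 1).
under eq_bigr do rewrite mulr1.
move=> <-; rewrite /ev /pairing.
under eq_fsbigr do rewrite mulr1.
by have [_ _ ->] := simplexT nu.
Qed.

Lemma Wt_le1 (nu : T) i : Wt nu i <= 1.
Proof.
rewrite -(Wt_sum nu) (bigD1 i) //= lerDl.
by apply: sumr_ge0 => j _; exact: Wt_ge0.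
Qed.

End WithPoint.
Hypothesis hH1 : hyp_H1 Delta.
Hypothesis hH2 : hyp_H2 Delta.

Lemma compactZ (f : Cc Y) (d : R) : 0 < d ->
  compact [set nu : T | d <= ev Delta (val f) nu].
Proof.
move=> d0; rewrite compact_ultra /= => F UF FZ.
have PF : ProperFilter F by exact: ultra_proper.
set Z := [set nu : T | _] in FZ *.
have [nu0 Znu0] := filter_ex FZ.
have [y0 _] := suppT_ne nu0.
have [fcont cK] := set_valP f.
pose K := closure (supp (val f)).
pose C := [set y | exists2 y', K y' & Delta ([set y] `|` [set y'])].
have cC : compact C := hH1 _ cK.
have ZC nu : Z nu -> forall i, C (P y0 nu i).
  move=> Znu i.
  have [j fj] : exists j, val f (P y0 nu j) != 0.
    case: (pselect (exists j, val f (P y0 nu j) != 0)) => // hn; exfalso.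
    have : ev Delta (val f) nu = 0.
      rewrite (ev_repr y0) big1 // => j _.
      have : ~ (val f (P y0 nu j) != 0) by move=> h; apply: hn; exists j.
      by move/negP; rewrite negbK => /eqP ->; rewrite mulr0.
    by move=> e; move: Znu; rewrite /Z /= e; rewrite leNgt d0.
  exists (P y0 nu j); first by apply: subset_closure.
  have [Ds _ _] := simplexT nu.
  apply: (hDsub _ _ Ds); last by exists (P y0 nu i); left.
  by move=> z [->|->]; exact: P_supp.
have /choice [q hq] : forall i, exists q, C q /\ (fun nu => P y0 nu i) @ F --> q.
  move=> i; have [q Cq cv] := @ultra_push_cvg _ _ F _ _ UF cC (filterS (fun nu Znu => ZC nu Znu i) FZ).
  by exists q.
have /choice [a ha] : forall i, exists a : R, [set` `[0, 1]] a /\ (fun nu => Wt y0 nu i : R) @ F --> (a : R).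
  move=> i.
  have FW : F ((fun nu => Wt y0 nu i) @^-1` [set` `[0, 1]]).
    apply: filterS filterT => nu _ /=.
    by rewrite in_itv /= Wt_ge0 Wt_le1.
  have [a a01 cv] := @ultra_push_cvg T R F (fun nu => Wt y0 nu i) [set` `[0, 1]] UF
     (@segment_compact R 0 1) FW.
  by exists a.
pose mlim (y : Y) : R := \sum_(i < N.+1 | y == q i) a i.
have a0 i : 0 <= a i by have [+ _] := ha i; rewrite /= in_itv /= => /andP[].
have supp_lim : supp mlim `<=` range q.
  move=> y; rewrite /supp /= => my; apply: contraPP my => nr.
  apply/negP; rewrite negbK /mlim big_pred0 // => i; apply/negP => /eqP yq.
  by apply: nr; exists i.
have pair_lim g : pairing mlim g = \sum_(i < N.+1) a i * g (q i).
  exact: pairing_repr.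
have cvg_ev (g : Y -> R) : continuous (g : Y -> R^o) ->
    ev Delta g @ F --> (\sum_(i < N.+1) a i * g (q i) : R^o).
  move=> gc.
  have -> : ev Delta g = fun nu => \sum_(i < N.+1) Wt y0 nu i * g (P y0 nu i).
    by apply: funext => nu; exact: ev_repr.
  apply: cvg_sum_ord => i.
  apply: cvgM; first exact: (ha i).2.
  exact: (continuous_cvg _ (gc (q i)) (hq i).2).
have sum_a : \sum_(i < N.+1) a i = 1.
  have h1 := cvg_ev (fun _ => 1) (@cst_continuous Y R^o 1).
  have e : ev Delta (fun _ : Y => (1 : R)) = fun _ => (1 : R^o).
    apply: funext => nu; rewrite (ev_repr y0); under eq_bigr do rewrite mulr1.
    exact: Wt_sum.
  rewrite e in h1.
  have := @cvg_unique R^o _ _ _ _ _ h1 (cvg_cst (1 : R^o)).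
  have h2 : \sum_(i < N.+1) a i * 1 = \sum_(i < N.+1) a i.
    by apply: eq_bigr => i _; rewrite mulr1.
  by move=> e1; rewrite -h2 e1.
have ne_lim : supp mlim !=set0.
  apply/set0P/eqP => e; have := pair_lim (fun _ => 1).
  rewrite /pairing e fsbig_set0.
  have h2 : \sum_(i < N.+1) a i * 1 = \sum_(i < N.+1) a i.
    by apply: eq_bigr => i _; rewrite mulr1.
  by rewrite h2 sum_a => /eqP; rewrite eq_sym oner_eq0.
have Dq : Delta (range q).
  pose L := {l : set T * T | F l.1 /\ l.1 l.2}.
  pose le (u v : L) := (sval v).1 `<=` (sval u).1.
  apply: (@hH2 L le N (fun i l => P y0 (sval l).2 i) q).
  - split.
    + by constructor; exists (Z, nu0).
    + by move=> u; rewrite /le.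
    + by move=> u v w uv vw; rewrite /le; exact: subset_trans vw uv.
    + move=> [[A x] [FA Ax]] [[B y] [FB By]].
      have FAB : F (A `&` B) by exact: filterI.
      have [z ABz] := filter_ex FAB.
      by exists (exist _ (A `&` B, z) (conj FAB ABz)); split => w [].
  - move=> i U nU.
    have FU : F ((fun nu => P y0 nu i) @^-1` U) by exact: (hq i).2 U nU.
    have [z Uz] := filter_ex FU.
    exists (exist _ (_, z) (conj FU Uz)) => l le0.
    by apply: le0; exact: (proj2 (svalP l)).
  - move=> l; rewrite range_P.
    by have [] := simplexT (sval l).2.
have simp : is_simplex_pt Delta mlim.
  split.
  - exact: (hDsub _ _ Dq supp_lim ne_lim).
  - by move=> y; apply: sumr_ge0 => i _; exact: a0.
  - have := pair_lim (fun _ => 1); rewrite /pairing.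
    under eq_fsbigr do rewrite mulr1.
    move=> ->; rewrite -[RHS]sum_a.
    by apply: eq_bigr => i _; rewrite mulr1.
pose nul : T := (exist _ mlim (mem_set simp) : simplex_pts Delta).
have ev_nul g : ev Delta g nul = \sum_(i < N.+1) a i * g (q i).
  exact: pair_lim.
have Fnul : F --> nul.
  apply: initial_cvg_from; apply: ptws_cvg_from => g.
  have := cvg_ev (val g) (proj1 (set_valP g)).
  by rewrite -ev_nul.
exists nul; split => //.
apply: (@closed_cvg _ _ F PF (ev Delta (val f)) _ (@closed_ge R d)) FZ _ _.
by rewrite ev_nul; exact: cvg_ev.
Qed.

End Main.

Lemma bump {R : realType} {Y : topologicalType} :
  hausdorff_space Y -> locally_compact [set: Y] ->
  forall y : Y, exists g : Y -> R, [/\ Cc_set g, forall z, 0 <= g z & 0 < g y].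
Proof.
move=> hY lcY y.
have [U nU [cU clU]] := lcY y I.
rewrite withinET in nU.
have crY := @locally_compact_completely_regular Y R lcY hY.
pose B := ~` U°.
have clB : closed B := open_closedC (open_interior U).
have nBy : ~ B y by move=> h; apply: h; exact: nU.
have [f [fc f01 f0 f1]] := (@uniform_separatorP Y R [set y] B).1 (crY y B clB nBy).
have fy : f y = 0 by apply: f0; exists y.
have fle z : f z <= 1.
  by have := f01 (f z) (ex_intro2 _ _ z I erefl); rewrite /= in_itv /= => /andP[].
exists (fun z => 1 - f z); split.
- split.
  + move=> z; apply: cvgB; [exact: cvg_cst | exact: fc].
  + apply: (subclosed_compact _ cU); first exact: closed_closure.
    apply: closure_sub => // z; rewrite /supp /= => hz.
    apply: contrapT => nUz.
    have Bz : B z by move=> /interior_subset.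
    have : f z = 1 by apply: f1; exists z.
    by move=> e; move: hz; rewrite e subrr eqxx.
- by move=> z; rewrite subr_ge0.
- by rewrite fy subr0 ltr01.
Qed.

Theorem proposition3p19 (R : realType) (X Y : topologicalType) (rho : Y -> X)
    (Delta : set (set Y)) :
  hausdorff_space X -> locally_compact [set: X] ->
  hausdorff_space Y -> locally_compact [set: Y] ->
  local_homeomorphism rho ->
  X_simplicial_complex rho Delta ->
  hyp_H1 Delta -> hyp_H2 Delta ->
  (forall (mu : @realization R Y Delta) (W : set (@realization R Y Delta)),
      S_nbhd rho mu W -> compact (closure W)) /\
  locally_compact [set: @realization R Y Delta].
Proof.
move=> hX lcX hY lcY lh [hfin [N hcard] _ hsub] H1 H2.
have cZ := @compactZ R Y Delta N hfin hcard hsub H1 H2.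
have clZ (f : Cc Y) (d : R) :
    closed [set nu : @realization R Y Delta | d <= ev Delta (val f) nu].
  by apply: (@preimage_closed _ _ (ev Delta (val f)) [set x | d <= x]);
    [move=> x _; exact: ev_cont | exact: closed_ge].
have key (f : Cc Y) (W : set (@realization R Y Delta)) (d : R) : 0 < d ->
    W `<=` [set nu | d <= ev Delta (val f) nu] -> compact (closure W).
  move=> d0 WZ; apply: (subclosed_compact _ (cZ f d d0)); first exact: closed_closure.
  exact: closure_sub.
split.
- move=> mu W [f [V [eps [hf eps0 heps ->]]]].
  have [y0 sy0] := suppT_ne Delta hfin mu.
  have [fcc f01 _ _ fpos] := hf y0 sy0.
  pose g : Cc Y := exist _ (f y0) (mem_set fcc).
  have [_ m0 _] := simplexT Delta mu.
  have ge : rl_weights mu y0 * f y0 y0 <= ev Delta (f y0) mu.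
    apply: pairing_ge => //; first exact: (finT Delta hfin).
    by move=> z; have /andP[] := f01 z.
  have hy0 := heps y0 sy0.
  apply: (key g _ (ev Delta (f y0) mu - eps)).
    by rewrite subr_gt0; exact: (lt_le_trans hy0 ge).
  move=> nu /= /(_ y0 sy0); rewrite /ev => /ltr_normlP [h1 h2].
  rewrite /=; move: h1; rewrite opprB => h1.
  by rewrite lerBlDr -lerBlDl ltW // -ltrBlDr.
- move=> mu _; rewrite withinET.
  have [y0 sy0] := suppT_ne Delta hfin mu.
  have [g [gcc g0 gpos]] := @bump R Y hY lcY y0.
  pose gg : Cc Y := exist _ g (mem_set gcc).
  have [_ m0 _] := simplexT Delta mu.
  have my0 : 0 < rl_weights mu y0 by rewrite lt0r sy0 m0.
  pose c := rl_weights mu y0 * g y0 / 2.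
  have c0 : 0 < c by rewrite /c divr_gt0 // mulr_gt0.
  have ge : rl_weights mu y0 * g y0 <= ev Delta g mu.
    by apply: pairing_ge => //; exact: (finT Delta hfin).
  pose W := [set nu : @realization R Y Delta | c < ev Delta g nu].
  exists (closure W); last split.
  + apply: filterS (@subset_closure _ W) _.
    apply: open_nbhs_nbhs; split.
      by apply: (@open_comp _ _ (ev Delta (val gg)) [set x | c < x]);
        [move=> x _; exact: ev_cont | exact: open_gt].
    rewrite /W /=; apply: (lt_le_trans _ ge).
    by rewrite /c ltr_pdivrMr // ltr_pMr ?mulr_gt0 // ltr1n.
  + by apply: (key gg W c c0) => nu /= /ltW.
  + exact: closed_closure.
Qed.
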